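(* Let $E,F$ be Banach spaces over $\mathbb{K}$ and $m,n,k\in\mathbb{N}$. If either $k=n=1$, or $kn$ is odd and $\mathbb{K}=\mathbb{R}$, then the map $P\in\mathcal{P}(^mE;F)\mapsto\Delta^n_kP\in\mathcal{P}(^n\mathcal{P}(^kF);\mathcal{P}(^{mkn}E))$ is injective.
   Context: Banach spaces are over $\mathbb{K}=\mathbb{R}$ or $\mathbb{C}$. $\mathcal{P}(^jX;Y)$ is the space of continuous $j$-homogeneous polynomials $X\to Y$, $\mathcal{P}(^jX)=\mathcal{P}(^jX;\mathbb{K})$. For $P\in\mathcal{P}(^mE;F)$, $\Delta^n_kP\colon\mathcal{P}(^kF)\to\mathcal{P}(^{mnk}E)$ is defined by $\Delta^n_kP(q)(x)=q(P(x))^n$. *)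

(* Defs.v *)
From mathcomp Require Import all_boot all_algebra.
From mathcomp Require Import all_classical all_reals all_analysis.
From mathcomp.real_closed Require Export complex.
Import numFieldNormedType.Exports.
Set Implicit Arguments. Unset Strict Implicit. Unset Printing Implicit Defensive.
Import GRing.Theory Num.Theory.
Local Open Scope ring_scope.

(* Algebraic j-linear maps X^j -> Y (X^j encoded as 'I_j -> X):
   additive and homogeneous in each coordinate separately. *)
Definition multilinear (K : numFieldType) (X Y : normedModType K) (j : nat)
    (A : ('I_j -> X) -> Y) : Prop :=
  forall (i : 'I_j) (v : 'I_j -> X) (a : K) (x y : X),
    A (fun l => if l == i then a *: x + y else v l)
    = a *: A (fun l => if l == i then x else v l)
      + A (fun l => if l == i then y else v l).

(* P \in P(^j X; Y): P is continuous and P(x) = A(x,...,x) for some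
   j-linear map A (Mujica's definition). *)
Definition hpoly (K : numFieldType) (X Y : normedModType K) (j : nat)
    (P : X -> Y) : Prop :=
  continuous P /\
  exists A : ('I_j -> X) -> Y, multilinear A /\ forall x, P x = A (fun _ => x).

Definition Delta (K : numFieldType) (E F : normedModType K) (n : nat)
    (P : E -> F) : (F -> K) -> (E -> K) :=
  fun q x => (q (P x)) ^+ n.

(* Injectivity of P |-> Delta^n_k P on P(^m E; F), where Delta^n_k P is
   a map on P(^k F) (two such maps are equal iff they agree on every
   q in P(^k F)). *)
Definition Delta_injective (K : numFieldType) (E F : normedModType K)
    (m n k : nat) : Prop :=
  forall P1 P2 : E -> F, hpoly m P1 -> hpoly m P2 ->
    (forall q : F -> K, hpoly k q -> Delta n P1 q = Delta n P2 q) ->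
    P1 = P2.

(* Main.v *)
Require Import Defs.
From HB Require Import structures.
From mathcomp Require Import all_boot all_order all_algebra.
From mathcomp Require Import all_classical all_reals all_analysis.
From mathcomp.real_closed Require Import complex.
From mathcomp Require Import lra.
Import numFieldNormedType.Exports.
Import Order.TTheory GRing.Theory Num.Theory.
Local Open Scope ring_scope.
Local Open Scope classical_set_scope.
Section HahnBanach.
Context (R : realType) (V : lmodType R) (p : V -> R).
Hypothesis pD : forall x y, p (x + y) <= p x + p y.
Hypothesis pZ : forall t x, p (t *: x) = `|t| * p x.

Definition good (S : set (V * R)) :=
  [/\ (forall x a y b, S (x,a) -> S (y,b) -> S (x+y, a+b)),
      (forall t x a, S (x,a) -> S (t *: x, t * a)) &
      (forall x a, S (x,a) -> a <= p x)].

Lemma p0 : p 0 = 0.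
Proof. by rewrite -(scale0r (0 : V)) pZ normr0 mul0r. Qed.

Lemma pge0 x : 0 <= p x.
Proof.
have h := pD x (- x); rewrite subrr p0 -scaleN1r pZ normrN normr1 mul1r in h.
lra.
Qed.

Lemma one_step (H : set (V * R)) (x0 : V) : good H -> H (0,0) ->
  exists c, good [set u | exists x a t, H (x,a) /\ u = (x + t *: x0, a + t * c)].
Proof.
move=> [Hadd Hsc Hdom] H00.
have key : forall x a y b, H (x,a) -> H (y,b) -> a - p (x - x0) <= p (y + x0) - b.
  move=> x a y b Hxa Hyb.
  have h1 := Hdom _ _ (Hadd _ _ _ _ Hxa Hyb).
  have h2 := pD (x - x0) (y + x0).
  rewrite addrACA addNr addr0 in h2.
  lra.
pose E := [set r | exists x a, H (x,a) /\ r = a - p (x - x0)].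
have hs : has_sup E.
  split; first by exists (0 - p (0 - x0)), 0, 0.
  exists (p (0 + x0) - 0) => r [x [a [Hxa ->]]]; exact: key.
have cub : forall y b, H (y,b) -> sup E <= p (y + x0) - b.
  move=> y b Hyb; apply: ge_sup; first by case: hs.
  by move=> r [x [a [Hxa ->]]]; exact: key.
have clb : forall x a, H (x,a) -> a - p (x - x0) <= sup E.
  by move=> x a Hxa; apply: sup_upper_bound => //; exists x, a.
exists (sup E); split.
- move=> _ _ _ _ [x [a [t [Hxa [-> ->]]]]] [y [b [s [Hyb [-> ->]]]]].
  exists (x + y), (a + b), (t + s); split; first exact: Hadd.
  by congr (_,_); rewrite ?scalerDl ?mulrDl addrACA.
- move=> s _ _ [x [a [t [Hxa [-> ->]]]]].
  exists (s *: x), (s * a), (s * t); split; first exact: Hsc.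
  by congr (_,_); rewrite ?scalerDr ?scalerA ?mulrDr ?mulrA.
- move=> _ _ [x [a [t [Hxa [-> ->]]]]].
  set c := sup E.
  have [t0|tlt0|->] := ltgtP t 0; last first.
  + by rewrite scale0r addr0 mul0r addr0; exact: Hdom.
  + (* t > 0 *)
    have h1 := cub _ _ (Hsc t^-1 _ _ Hxa).
    have ht : t != 0 by rewrite gt_eqF.
    have -> : x + t *: x0 = t *: (t^-1 *: x + x0).
      by rewrite scalerDr scalerA mulfV // scale1r.
    rewrite pZ gtr0_norm //.
    have h2 : t * c <= t * (p (t^-1 *: x + x0) - t^-1 * a).
      by rewrite ler_pM2l.
    rewrite mulrBr mulrA mulfV // mul1r in h2.
    lra.
  + (* t < 0 *)
    set s := - t.
    have s0 : 0 < s by rewrite /s oppr_gt0.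
    have hs0 : s != 0 by rewrite gt_eqF.
    have h1 := clb _ _ (Hsc s^-1 _ _ Hxa).
    have -> : x + t *: x0 = s *: (s^-1 *: x - x0).
      by rewrite scalerDr scalerA mulfV // scale1r scalerN /s scaleNr opprK.
    rewrite pZ gtr0_norm //.
    have h2 : s * (s^-1 * a - p (s^-1 *: x - x0)) <= s * c.
      by rewrite ler_pM2l.
    rewrite mulrBr mulrA mulfV // mul1r in h2.
    have -> : t = - s by rewrite /s opprK.
    lra.
Qed.


Lemma good_uniq {H : set (V * R)} {x a b} : good H -> H (x,a) -> H (x,b) -> a = b.
Proof.
move=> [Hadd Hsc Hdom] Ha Hb.
have h1 := Hdom _ _ (Hadd _ _ _ _ Ha (Hsc (-1) _ _ Hb)).
have h2 := Hdom _ _ (Hadd _ _ _ _ Hb (Hsc (-1) _ _ Ha)).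
rewrite scaleN1r subrr p0 in h1 h2.
lra.
Qed.

Lemma HB_real (z : V) : exists f : V -> R,
  [/\ (forall x y, f (x + y) = f x + f y), (forall t x, f (t *: x) = t * f x),
      (forall x, f x <= p x) & f z = p z].
Proof.
pose G0 : set (V * R) := [set u | exists t, u = (t *: z, t * p z)].
have gG0 : good G0.
  split.
  - move=> _ _ _ _ [t [-> ->]] [s [-> ->]]; exists (t + s).
    by rewrite scalerDl mulrDl.
  - move=> s _ _ [t [-> ->]]; exists (s * t).
    by rewrite scalerA mulrA.
  - move=> _ _ [t [-> ->]]; rewrite pZ ler_wpM2r ?pge0 //; exact: ler_norm.
have [|A [PA Amax]] := @Zorn_bigcup (V * R) (fun S => good (G0 `|` S)).
  move=> F FP Ftot.
  have two : forall u1 u2, (G0 `|` \bigcup_(X in F) X) u1 ->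
      (G0 `|` \bigcup_(X in F) X) u2 ->
      exists S, [/\ good S, S `<=` G0 `|` \bigcup_(X in F) X, S u1 & S u2].
    move=> u1 u2 [h1|[X FX h1]] [h2|[Y FY h2]].
    - by exists G0; split => //; apply: subsetUl.
    - exists (G0 `|` Y); split; [exact: FP | | by left | by right].
      by move=> u [?|?]; [left|right; exists Y].
    - exists (G0 `|` X); split; [exact: FP | | by right | by left].
      by move=> u [?|?]; [left|right; exists X].
    - have [XY|YX] := Ftot _ _ FX FY.
      + exists (G0 `|` Y); split; [exact: FP | | by right; apply: XY | by right].
        by move=> u [?|?]; [left|right; exists Y].
      + exists (G0 `|` X); split; [exact: FP | | by right | by right; apply: YX].
        by move=> u [?|?]; [left|right; exists X].
  split.
  - move=> x a y b h1 h2; have [S [[Sadd _ _] SU S1 S2]] := two _ _ h1 h2.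
    exact/SU/Sadd.
  - move=> t x a h1; have [S [[_ Ssc _] SU S1 _]] := two _ _ h1 h1.
    exact/SU/Ssc.
  - move=> x a h1; have [S [[_ _ Sdom] SU S1 _]] := two _ _ h1 h1.
    exact: Sdom.
set H := G0 `|` A.
have H00 : H (0,0) by left; exists 0; rewrite scale0r mul0r.
have ex : forall x0, exists c, H (x0, c).
  move=> x0; case: (pselect (exists c, H (x0, c))) => // nH; exfalso.
  have [c gH'] := @one_step H x0 PA H00.
  set H' := [set u | _] in gH'.
  have HH' : H `<=` H'.
    by move=> [x a] hxa; exists x, a, 0; rewrite scale0r mul0r !addr0.
  have H'x0 : H' (x0, c) by exists 0, 0, 1; rewrite scale1r mul1r !add0r.
  apply: (Amax H').
    split; first by move=> u Au; apply: HH'; right.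
    by move=> sub; apply: nH; exists c; right; apply: sub.
  have -> : G0 `|` H' = H' by apply/setUidr => u G0u; apply: HH'; left.
  exact: gH'.
have [f Hf] := choice ex.
have [Hadd Hsc Hdom] := PA.
exists f; split.
- by move=> x y; apply: (good_uniq PA (Hf _)); apply: Hadd; apply: Hf.
- by move=> t x; apply: (good_uniq PA (Hf _)); apply: Hsc; apply: Hf.
- by move=> x; apply: Hdom; apply: Hf.
- apply: (good_uniq PA (Hf _)); left; exists 1; by rewrite scale1r mul1r.
Qed.

End HahnBanach.
Lemma lip_cont (K : numFieldType) (V W : normedModType K) (f : V -> W) (C : K) :
  0 < C -> (forall x y, `|f x - f y| <= C * `|x - y|) -> continuous f.
Proof.
move=> C0 H x; apply/(@cvgrPdist_lt _ _ _ (nbhs x)) => e e0; near=> z.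
rewrite (le_lt_trans (H _ _)) // -ltr_pdivlMl //.
by near: z; apply: cvgr_dist_lt => //; rewrite mulr_gt0 // invr_gt0.
Unshelve. all: by end_near. Qed.

Section Generic.
Context (K : numFieldType) (F : normedModType K) (f : F -> K).
Hypothesis fD : forall x y, f (x + y) = f x + f y.
Hypothesis fZ : forall a x, f (a *: x) = a * f x.
Hypothesis fc : continuous f.

Lemma pow_cont k : continuous (fun x => f x ^+ k).
Proof.
elim: k => [|k IH].
  have -> : (fun x => f x ^+ 0) = cst 1 by apply: funext => x; rewrite expr0.
  exact: cst_continuous.
have -> : (fun x => f x ^+ k.+1) = (f \* (fun x => f x ^+ k)).
  by apply: funext => x; rewrite exprS.
by move=> x; apply: continuousM; [exact: fc | exact: IH].
Qed.

Lemma hpoly_pow k : hpoly k (fun x => f x ^+ k).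
Proof.
split; first exact: pow_cont.
exists (fun v => \prod_(l < k) f (v l)); split; last first.
  by move=> x; rewrite prodr_const card_ord.
move=> i v a x y.
have E w : \prod_(l < k) f (if l == i then w else v l)
         = f w * \prod_(l < k | l != i) f (v l).
  rewrite (bigD1 i) //= eqxx; congr (_ * _).
  by apply: eq_bigr => l /negbTE ->.
rewrite !E fD fZ.
by rewrite -mulr_algl mulrDl !mulrA mulr_algl.
Qed.
End Generic.

Lemma odd_inj (R : realDomainType) n (x y : R) : odd n -> x ^+ n = y ^+ n -> x = y.
Proof.
move=> on e.
have n0 : (0 < n)%N by case: n on e.
have ha : `|x| = `|y|.
  by apply/eqP; rewrite -(eqrXn2 n0) ?normr_ge0 // -!normrX e.
have hs : (0 <= x) = (0 <= y) by rewrite -(exprn_odd_ge0 _ on) e exprn_odd_ge0.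
case: (lerP 0 x) => hx.
  by rewrite -(ger0_norm hx) ha ger0_norm // -hs.
have hy : y < 0 by rewrite ltNge -hs -ltNge.
by rewrite -[x]opprK -(ltr0_norm hx) ha ltr0_norm // opprK.
Qed.

Lemma real_part (R : realType) (E F : normedModType R) m n k :
  odd (k * n) -> Delta_injective E F m n k.
Proof.
move=> on P1 P2 _ _ HD; apply: funext => x.
apply/eqP; rewrite -subr_eq0; apply/negPn/negP => nz.
set w := P1 x - P2 x in nz.
have [f [fD fZ fle fw]] := @HB_real R F (@Num.norm _ F) (@ler_normD _ _) (@normrZ _ _) w.
have fN v : f (- v) = - f v by rewrite -scaleN1r fZ mulN1r.
have fB a b : f (a - b) = f a - f b by rewrite fD fN.
have fabs v : `|f v| <= `|v|.
  by rewrite ler_norml fle andbT lerNl -fN (le_trans (fle _)) // normrN.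
have fc : continuous f.
  apply: (@lip_cont _ _ _ _ 1) => // a b; rewrite mul1r -fB; exact: fabs.
have hq := HD _ (@hpoly_pow _ _ f fD fZ fc k).
have := congr1 (fun g => g x) hq; rewrite /Delta -!exprM => /(@odd_inj _ _ _ _ on) e.
move: fw; rewrite /w fB e subrr => /esym/eqP; rewrite normr_eq0 (negbTE nz).
done.
Qed.

Local Open Scope complex_scope.
Section RealOf.
Context (R : realType) (F : normedModType R[i]).
Definition realV : Type := F.
HB.instance Definition _ := GRing.Zmodule.on realV.
Definition rscale (t : R) (x : realV) : realV := (t%:C *: (x : F)).
Lemma rscaleA a b v : rscale a (rscale b v) = rscale (a * b) v.
Proof. by rewrite /rscale scalerA rmorphM. Qed.
Lemma rscale1 : left_id 1 rscale.
Proof. by move=> v; rewrite /rscale rmorph1 scale1r. Qed.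
Lemma rscaleDr : right_distributive rscale +%R.
Proof. by move=> a u v; rewrite /rscale scalerDr. Qed.
Lemma rscaleDl v : {morph rscale^~ v: a b / a + b}.
Proof. by move=> a b; rewrite /rscale rmorphD scalerDl. Qed.
HB.instance Definition _ := GRing.Zmodule_isLmodule.Build R realV rscaleA rscale1 rscaleDr rscaleDl.
End RealOf.


Notation cRe := (@complex.Re _).
Notation cIm := (@complex.Im _).
Lemma ReD (R : rcfType) (a b : R[i]) : cRe (a + b) = cRe a + cRe b.
Proof. by case: a b => [a1 a2] [b1 b2]. Qed.
Lemma ReM_real (R : rcfType) (r : R) (v : R[i]) : cRe (r%:C * v) = r * cRe v.
Proof. by case: v => a b /=; rewrite mul0r subr0. Qed.
Lemma normC_real (R : rcfType) (r : R) : `|r%:C| = `|r|%:C.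
Proof. by rewrite normc_def /= expr0n addr0 sqrtr_sqr. Qed.

Lemma complex_part (R : realType) (E F : normedModType R[i]) m :
  Delta_injective E F m 1 1.
Proof.
move=> P1 P2 _ _ HD; apply: funext => x.
apply/eqP; rewrite -subr_eq0; apply/negPn/negP => nz.
set w := P1 x - P2 x in nz.
pose p (v : realV R F) : R := cRe `|(v : F)|.
have normE (v : F) : `|v| = (cRe `|v|)%:C.
  by rewrite RRe_real // ger0_real // normr_ge0.
have pD : forall a b, p (a + b) <= p a + p b.
  move=> a b; rewrite /p -ReD.
  by have := ler_normD (a : F) b; rewrite lecE => /andP [_ h].
have pZ : forall t a, p (t *: a) = `|t| * p a.
  move=> t a; rewrite /p.
  change (cRe `|t%:C *: (a : F)| = `|t| * cRe `|(a : F)|).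
  by rewrite normrZ normC_real ReM_real.
have [u [uD uZ ule uw]] := @HB_real R (realV R F) p pD pZ w.
have uR t (v : F) : u (t%:C *: v) = t * u v := uZ t v.
have uF a b : u ((a : F) + b) = u a + u b := uD a b.
have uN (v : F) : u (- v) = - u v.
  have -> : - v = (-1)%:C *: v by rewrite rmorphN rmorph1 scaleN1r.
  by rewrite uR mulN1r.
have uabs (v : F) : `|u v| <= cRe `|v|.
  rewrite ler_norml (ule v) andbT lerNl -uN.
  by rewrite (le_trans (ule _)) // /p normrN.
pose phi (v : F) : R[i] := (u v) +i* (- u ('i *: v)).
have phiD a b : phi (a + b) = phi a + phi b.
  by rewrite /phi scalerDr !uF; simpc.
have ii (v : F) : 'i *: ('i *: v) = - v.
  by rewrite scalerA -expr2 sqr_i scaleN1r.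
have cdec c (v : F) : c *: v = (cRe c)%:C *: v + (cIm c)%:C *: ('i *: v).
  by rewrite {1}(complexE c) scalerDl [_ * (cIm c)%:C]mulrC -scalerA.
have phiZ c v : phi (c *: v) = c * phi v.
  have e2 : 'i *: (c *: v) = c *: ('i *: v) by rewrite !scalerA mulrC.
  rewrite /phi e2 (cdec c v) (cdec c ('i *: v)) ii !uF !uR uN.
  by clear e2; case: c => a b /=; simpc.
have phiN v : phi (- v) = - phi v by rewrite -scaleN1r phiZ mulN1r.
have phiB a b : phi (a - b) = phi a - phi b by rewrite phiD phiN.
have phiE v : phi v = (u v)%:C + 'i * (- u ('i *: v))%:C.
  exact: (complexE _).
have ni : `|'i : R[i]| = 1.
  by rewrite normc_def /= expr0n /= add0r expr1n sqrtr1.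
have phi_abs v : `|phi v| <= (1 + 1) * `|v|.
  rewrite phiE mulrDl mul1r (le_trans (ler_normD _ _)) // lerD //.
    rewrite normC_real [X in _ <= X]normE lecR; exact: uabs.
  rewrite normrM ni mul1r normC_real normrN [X in _ <= X]normE lecR.
  by have := uabs ('i *: v); rewrite normrZ ni mul1r.
have phic : continuous (phi : F -> R[i]^o).
  apply: (@lip_cont _ _ _ _ (1 + 1)) => [|a b]; first by rewrite addr_gt0 ?ltr01.
  by rewrite -phiB; exact: phi_abs.
have hq := HD _ (@hpoly_pow _ _ phi phiD phiZ phic 1).
have := congr1 (fun g => g x) hq; rewrite /Delta !expr1 => e.
have : phi w = 0 by rewrite /w phiB e subrr.
rewrite /phi => /(congr1 cRe) /=.
rewrite uw /p => h.
have := normr_gt0 w; rewrite nz ltcE => /andP [_].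
by rewrite h /= ltxx.
Qed.

Local Close Scope classical_set_scope.
Local Open Scope ring_scope.
Local Open Scope complex_scope.

Theorem mainTheorem4 :
  (forall (R : realType) (E F : completeNormedModType R) (m n k : nat),
      (k = 1%N /\ n = 1%N) \/ odd (k * n) ->
      Delta_injective E F m n k)
  /\
  (forall (R : realType) (E F : completeNormedModType R[i]) (m n k : nat),
      k = 1%N /\ n = 1%N ->
      Delta_injective E F m n k).
Proof.
split.
- move=> R E F m n k [[-> ->]|on]; apply: real_part => //.
- by move=> R E F m n k [-> ->]; apply: complex_part.
Qed.
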